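(* Let $N$ be a finitely generated torsion-free nilpotent group and let $\phi\in\mathrm{Aut}(N)$ be homologically trivial, i.e. $\phi$ induces the identity on $H_1(N,\mathbb{Z})$. Then $K_{\phi}=1$.
   Context: For a finitely generated group $G$ with finite generating set $S$, $\ell=\ell_S$ denotes word length with respect to $S$. For $\phi\in\mathrm{Aut}(G)$, the entropy of $\phi$ is $K_{\phi}=\max_{s\in S}\lim_{n\to\infty}\ell(\phi^n(s))^{1/n}$; it is independent of $S$. *)

(* Defs.v *)
From Stdlib Require Import Reals Lra Lia Arith List Classical ClassicalEpsilon.
Open Scope R_scope.

Record Group := {
  carrier :> Type;
  gmul : carrier -> carrier -> carrier;
  ginv : carrier -> carrier;
  gone : carrier;
  gmul_assoc : forall x y z, gmul x (gmul y z) = gmul (gmul x y) z;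
  gmul_1l : forall x, gmul gone x = x;
  gmul_1r : forall x, gmul x gone = x;
  gmul_Vl : forall x, gmul (ginv x) x = gone;
  gmul_Vr : forall x, gmul x (ginv x) = gone
}.

Arguments gmul {g} _ _.
Arguments ginv {g} _.
Arguments gone {g}.

Section GroupDefs.
Variable G : Group.

Fixpoint gpow (g : G) (n : nat) : G :=
  match n with O => gone | S k => gmul g (gpow g k) end.

Definition torsion_free : Prop :=
  forall (g : G) (n : nat), gpow g (S n) = gone -> g = gone.

Inductive generated (A : G -> Prop) : G -> Prop :=
  | gen_in : forall x, A x -> generated A x
  | gen_one : generated A gone
  | gen_inv : forall x, generated A x -> generated A (ginv x)
  | gen_mul : forall x y, generated A x -> generated A y -> generated A (gmul x y).

Definition commutator (a b : G) : G := gmul (gmul (ginv a) (ginv b)) (gmul a b).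

(* lower central series: gamma 0 = G, gamma (i+1) = [gamma i, G] *)
Fixpoint gamma (i : nat) : G -> Prop :=
  match i with
  | O => fun _ => True
  | S k => generated (fun x => exists a b, gamma k a /\ x = commutator a b)
  end.

Definition nilpotent : Prop := exists c, forall x, gamma c x -> x = gone.

(* words over S ∪ S^{-1}: (true, s) stands for s, (false, s) for s^{-1} *)
Definition word_over (S : list G) (w : list (bool * G)) : Prop :=
  Forall (fun p : bool * G => In (snd p) S) w.

Definition eval_word (w : list (bool * G)) : G :=
  fold_right (fun (p : bool * G) (acc : G) => gmul (if fst p then snd p else ginv (snd p)) acc) gone w.

Definition generates (S : list G) : Prop :=
  forall g : G, exists w, word_over S w /\ eval_word w = g.

Definition has_word_of_length (S : list G) (g : G) (n : nat) : Prop :=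
  exists w, word_over S w /\ length w = n /\ eval_word w = g.

(* word length l_S(g): the least length of a word over S ∪ S^{-1} representing g
   (chosen by classical choice; well defined whenever S generates G). *)
Definition word_length (S : list G) (g : G) : nat :=
  epsilon (inhabits 0%nat)
    (fun n => has_word_of_length S g n /\
              forall m, has_word_of_length S g m -> (n <= m)%nat).

Definition is_hom (f : G -> G) : Prop := forall x y, f (gmul x y) = gmul (f x) (f y).

Definition is_automorphism (f : G -> G) : Prop :=
  is_hom f /\ (forall x y, f x = f y -> x = y) /\ (forall y, exists x, f x = y).

(* phi induces the identity on H_1(G,Z) = G/[G,G] *)
Definition homologically_trivial (f : G -> G) : Prop :=
  forall g : G, gamma 1 (gmul (f g) (ginv g)).

(* real n-th root of a natural number l (with 0^(1/n) = 0) *)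
Definition nat_root (l : nat) (n : nat) : R :=
  match l with O => 0 | _ => Rpower (INR l) (/ INR n) end.

Definition entropy_seq (S : list G) (f : G -> G) (s : G) : nat -> R :=
  fun n => nat_root (word_length S (Nat.iter n f s)) n.

(* K_phi = K, where K_phi = max_{s in S} lim_n l_S(phi^n(s))^(1/n):
   every limit exists, all are <= K, and K is attained. *)
Definition entropy_is (S : list G) (f : G -> G) (K : R) : Prop :=
  (forall s, In s S -> exists l, Un_cv (entropy_seq S f s) l /\ l <= K) /\
  (exists s, In s S /\ Un_cv (entropy_seq S f s) K).

End GroupDefs.

(* Main.v *)
Require Import Defs.
From Stdlib Require Import Reals List Lia Lra Classical ClassicalEpsilon.
From Coquelicot Require Import Coquelicot.

Lemma g_assoc' (G : Group) (x y z : G) : gmul (gmul x y) z = gmul x (gmul y z).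
Proof. now rewrite gmul_assoc. Qed.
Lemma g_Vl' (G : Group) (x y : G) : gmul (ginv x) (gmul x y) = y.
Proof. now rewrite gmul_assoc, gmul_Vl, gmul_1l. Qed.
Lemma g_Vr' (G : Group) (x y : G) : gmul x (gmul (ginv x) y) = y.
Proof. now rewrite gmul_assoc, gmul_Vr, gmul_1l. Qed.
Lemma g_inv_uniq (G : Group) (x y : G) : gmul x y = gone -> ginv x = y.
Proof. intro H. rewrite <- (gmul_1r G (ginv x)), <- H, gmul_assoc, gmul_Vl, gmul_1l. reflexivity. Qed.
Lemma g_inv_mul (G : Group) (x y : G) : ginv (gmul x y) = gmul (ginv y) (ginv x).
Proof. apply g_inv_uniq. rewrite g_assoc', g_Vr'. apply gmul_Vr. Qed.
Lemma g_inv_inv (G : Group) (x : G) : ginv (ginv x) = x.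
Proof. apply g_inv_uniq. apply gmul_Vl. Qed.
Lemma g_inv_one (G : Group) : ginv (@gone G) = gone.
Proof. apply g_inv_uniq. apply gmul_1l. Qed.

Global Hint Rewrite g_assoc' g_Vl' g_Vr' g_inv_mul g_inv_inv g_inv_one gmul_1l gmul_1r gmul_Vl gmul_Vr : gsimp.
Ltac gsimpl := autorewrite with gsimp.

Definition subgroup (G : Group) (P : G -> Prop) : Prop :=
  P gone /\ (forall x y, P x -> P y -> P (gmul x y)) /\ (forall x, P x -> P (ginv x)).
Definition normal (G : Group) (P : G -> Prop) : Prop :=
  forall x g, P x -> P (gmul (ginv g) (gmul x g)).

Lemma generated_sub (G : Group) (A P : G -> Prop) :
  subgroup G P -> (forall x, A x -> P x) -> forall x, generated G A x -> P x.
Proof. intros [H1 [H2 H3]] HA x Hx. induction Hx; auto. Qed.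

Lemma gamma_sub (G : Group) k : subgroup G (gamma G k).
Proof. destruct k; simpl; repeat split; intros; auto using gen_mul, gen_inv, gen_one. Qed.

Lemma gamma_normal (G : Group) k : normal G (gamma G k).
Proof.
  induction k; intros x g Hx; simpl in *; auto.
  revert Hx. apply (generated_sub G _ (fun x => generated G _ (gmul (ginv g) (gmul x g)))).
  - repeat split.
    + gsimpl. apply gen_one.
    + intros a b Ha Hb. replace (gmul (ginv g) (gmul (gmul a b) g)) with
        (gmul (gmul (ginv g) (gmul a g)) (gmul (ginv g) (gmul b g))) by (gsimpl; reflexivity).
      now apply gen_mul.
    + intros a Ha. replace (gmul (ginv g) (gmul (ginv a) g)) with
        (ginv (gmul (ginv g) (gmul a g))) by (gsimpl; reflexivity). now apply gen_inv.
  - intros y [a [b [Ha ->]]]. apply gen_in. exists (gmul (ginv g) (gmul a g)), (gmul (ginv g) (gmul b g)).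
    split; [apply IHk; auto|]. unfold commutator. gsimpl. reflexivity.
Qed.

Lemma gamma_comm (G : Group) k a b : gamma G k a -> gamma G (S k) (commutator G a b).
Proof. intro H. simpl. apply gen_in. eauto. Qed.

Lemma gamma_comm' (G : Group) k a b : gamma G k b -> gamma G (S k) (commutator G a b).
Proof. intro H. replace (commutator G a b) with (ginv (commutator G b a)).
  apply (gamma_sub G (S k)). now apply gamma_comm. unfold commutator; gsimpl; reflexivity. Qed.

Lemma gamma_decr (G : Group) k x : gamma G (S k) x -> gamma G k x.
Proof.
  simpl. apply generated_sub. apply gamma_sub.
  intros y [a [b [Ha ->]]]. unfold commutator.
  replace (gmul (gmul (ginv a) (ginv b)) (gmul a b)) with (gmul (ginv a) (gmul (ginv b) (gmul a b))) by (gsimpl; reflexivity).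
  apply (gamma_sub G k). apply (gamma_sub G k); auto. apply gamma_normal; auto.
Qed.

Lemma hall_witt (G : Group) (x y z : G) :
  gmul (gmul (ginv y) (gmul (commutator G (commutator G x (ginv y)) z) y))
   (gmul (gmul (ginv z) (gmul (commutator G (commutator G y (ginv z)) x) z))
         (gmul (ginv x) (gmul (commutator G (commutator G z (ginv x)) y) x))) = gone.
Proof. unfold commutator. gsimpl. reflexivity. Qed.

Lemma gamma_mulc (G : Group) k x y : gamma G k x -> gamma G k y -> gamma G k (gmul x y).
Proof. intros; now apply (gamma_sub G k). Qed.
Lemma gamma_invc (G : Group) k x : gamma G k x -> gamma G k (ginv x).
Proof. intros; now apply (gamma_sub G k). Qed.

Lemma gamma_comm_ij (G : Group) j : forall i a b, gamma G i a -> gamma G j b ->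
  gamma G (i + j + 1) (commutator G a b).
Proof.
  induction j; intros i a b Ha Hb.
  - replace (i+0+1)%nat with (S i) by lia. now apply gamma_comm.
  - revert Hb. simpl gamma at 1.
    apply (generated_sub G _ (fun b => gamma G (i + S j + 1) (commutator G a b))).
    + repeat split.
      * unfold commutator; gsimpl. apply (gamma_sub G).
      * intros b1 b2 H1 H2.
        replace (commutator G a (gmul b1 b2)) with
          (gmul (commutator G a b2) (gmul (ginv b2) (gmul (commutator G a b1) b2)))
          by (unfold commutator; gsimpl; reflexivity).
        apply gamma_mulc; auto. apply gamma_normal; auto.
      * intros b1 H1.
        replace (commutator G a (ginv b1)) with
          (gmul (ginv (ginv b1)) (gmul (ginv (commutator G a b1)) (ginv b1)))
          by (unfold commutator; gsimpl; reflexivity).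
        apply gamma_normal. now apply gamma_invc.
    + intros y [c [d [Hc ->]]].
      pose proof (hall_witt G c (ginv d) a) as HW.
      rewrite g_inv_inv in HW.
      set (N := (i + S j + 1)%nat).
      assert (T2 : gamma G N (gmul (ginv a) (gmul (commutator G (commutator G (ginv d) (ginv a)) c) a))).
      { apply gamma_normal. replace N with ((S i) + j + 1)%nat by (unfold N; lia).
        apply IHj; [apply gamma_comm'; now apply gamma_invc | exact Hc]. }
      assert (T3 : gamma G N (gmul (ginv c) (gmul (commutator G (commutator G a (ginv c)) (ginv d)) c))).
      { apply gamma_normal. replace N with (S (i + j + 1)) by (unfold N; lia).
        apply gamma_comm. apply IHj; [exact Ha | now apply gamma_invc]. }
      set (X := commutator G (commutator G c d) a) in *.
      set (Y2 := gmul (ginv a) _) in *. set (Y3 := gmul (ginv c) _) in *.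
      assert (HX : gmul d (gmul X (ginv d)) = ginv (gmul Y2 Y3)).
      { rewrite <- (g_inv_uniq _ _ _ HW). gsimpl. reflexivity. }
      assert (HX' : X = gmul (ginv d) (gmul (ginv (gmul Y2 Y3)) d)).
      { rewrite <- HX. gsimpl. reflexivity. }
      replace (commutator G a (commutator G c d)) with (ginv X) by (unfold X, commutator; gsimpl; reflexivity).
      rewrite HX'. apply gamma_invc. apply gamma_normal. apply gamma_invc. now apply gamma_mulc.
Qed.

Lemma hom_one (G : Group) f : is_hom G f -> f gone = gone.
Proof. intro H. pose proof (H gone gone) as E. rewrite gmul_1l in E.
  rewrite <- (g_Vl' G (f gone) (f gone)), <- E, gmul_Vl. reflexivity. Qed.
Lemma hom_inv (G : Group) f x : is_hom G f -> f (ginv x) = ginv (f x).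
Proof. intro H. symmetry. apply g_inv_uniq. rewrite <- H, gmul_Vr. now apply hom_one. Qed.
Lemma hom_comm (G : Group) f a b : is_hom G f -> f (commutator G a b) = commutator G (f a) (f b).
Proof. intro H. unfold commutator. rewrite !H, !(hom_inv G f _ H). reflexivity. Qed.

Definition Delta (G : Group) (f : G -> G) (x : G) : G := gmul (ginv x) (f x).

Lemma Delta_gamma (G : Group) f : is_hom G f -> homologically_trivial G f ->
  forall k x, gamma G k x -> gamma G (S k) (Delta G f x).
Proof.
  intros Hf Ht k. induction k; intros x Hx.
  - unfold Delta. replace (gmul (ginv x) (f x)) with (gmul (ginv x) (gmul (gmul (f x) (ginv x)) x))
      by (gsimpl; reflexivity). apply gamma_normal. apply Ht.
  - revert x Hx. simpl gamma at 1.
    apply (generated_sub G _ (fun x => gamma G (S (S k)) (Delta G f x))).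
    + unfold Delta. split; [|split].
      * rewrite (hom_one G f Hf). gsimpl. apply (gamma_sub G).
      * intros x y H1 H2. rewrite Hf.
        replace (gmul (ginv (gmul x y)) (gmul (f x) (f y))) with
          (gmul (gmul (ginv y) (gmul (gmul (ginv x) (f x)) y)) (gmul (ginv y) (f y)))
          by (gsimpl; reflexivity).
        apply gamma_mulc; auto. apply gamma_normal; auto.
      * intros x H1. rewrite (hom_inv G f x Hf).
        replace (gmul (ginv (ginv x)) (ginv (f x))) with
          (gmul (ginv (ginv x)) (gmul (ginv (gmul (ginv x) (f x))) (ginv x)))
          by (gsimpl; reflexivity).
        apply gamma_normal. now apply gamma_invc.
    + intros y [a [b [Ha ->]]]. unfold Delta. rewrite (hom_comm G f a b Hf).
      set (u := Delta G f a). set (v := Delta G f b).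
      assert (Hu : gamma G (S k) u) by (apply IHk; auto).
      assert (Hv : gamma G 1 v).
      { unfold v, Delta. replace (gmul (ginv b) (f b)) with (gmul (ginv b) (gmul (gmul (f b) (ginv b)) b))
          by (gsimpl; reflexivity). apply gamma_normal. apply Ht. }
      assert (Ea : f a = gmul a u) by (unfold u, Delta; gsimpl; reflexivity).
      assert (Eb : f b = gmul b v) by (unfold v, Delta; gsimpl; reflexivity).
      rewrite Ea, Eb. set (z := commutator G a b).
      replace (gmul (ginv z) (commutator G (gmul a u) (gmul b v))) with
        (gmul (gmul (ginv z) (gmul (gmul (ginv u) (gmul (commutator G a v) u)) z))
           (gmul (commutator G z (gmul v u)) (commutator G u (gmul b v))))
        by (unfold z, commutator; gsimpl; reflexivity).
      apply gamma_mulc; [|apply gamma_mulc].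
      * apply gamma_normal. apply gamma_normal.
        replace (S (S k)) with (k + 1 + 1)%nat by lia. apply gamma_comm_ij; auto.
      * apply gamma_comm. unfold z. now apply gamma_comm.
      * now apply gamma_comm.
Qed.

Definition WB (G : Group) (Sg : list G) (g : G) (m : nat) : Prop :=
  exists w, word_over G Sg w /\ (length w <= m)%nat /\ eval_word G w = g.

Lemma eval_app (G : Group) (w1 w2 : list (bool * G)) :
  eval_word G (w1 ++ w2) = gmul (eval_word G w1) (eval_word G w2).
Proof. induction w1; simpl. now rewrite gmul_1l. rewrite IHw1. apply gmul_assoc. Qed.

Lemma WB_one (G : Group) Sg : WB G Sg gone 0.
Proof. exists nil. repeat split; auto. constructor. Qed.

Lemma WB_mul (G : Group) Sg x y a b : WB G Sg x a -> WB G Sg y b -> WB G Sg (gmul x y) (a + b).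
Proof. intros [w1 [H1 [L1 E1]]] [w2 [H2 [L2 E2]]]. exists (w1 ++ w2). split; [|split].
  - apply Forall_app; auto.
  - rewrite length_app; lia.
  - now rewrite eval_app, E1, E2. Qed.

Lemma WB_mono (G : Group) Sg x a b : WB G Sg x a -> (a <= b)%nat -> WB G Sg x b.
Proof. intros [w [H [L E]]] Hab. exists w. repeat split; auto. lia. Qed.

Lemma iter_hom (G : Group) f n x y : is_hom G f ->
  Nat.iter n f (gmul x y) = gmul (Nat.iter n f x) (Nat.iter n f y).
Proof. intro H. induction n; simpl; auto. now rewrite IHn, H. Qed.

Lemma poly_bound (G : Group) (Sg : list G) (f : G -> G) (c : nat) :
  generates G Sg -> is_hom G f -> homologically_trivial G f ->
  (forall x, gamma G c x -> x = gone) ->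
  forall m x, gamma G (c - m) x -> exists C d, forall n, WB G Sg (Nat.iter n f x) (C * (n+1)^d).
Proof.
  intros Hgen Hf Ht Hc m. induction m; intros x Hx.
  - rewrite Nat.sub_0_r in Hx. apply Hc in Hx. subst x. exists 0%nat, 0%nat. intro n.
    replace (Nat.iter n f gone) with (@gone G). apply WB_one.
    induction n; simpl; auto. rewrite <- IHn. symmetry. now apply hom_one.
  - assert (Hy : gamma G (c - m) (Delta G f x)).
    { apply (Delta_gamma G f Hf Ht) in Hx.
      destruct (Nat.le_gt_cases c m) as [Hle|Hlt].
      + replace (c - m)%nat with 0%nat by lia. exact I.
      + replace (c - m)%nat with (Datatypes.S (c - Datatypes.S m))%nat by lia. exact Hx. }
    destruct (IHm _ Hy) as [C [d HB]].
    destruct (Hgen x) as [w0 [Hw0 E0]].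
    set (l0 := length w0).
    assert (Hx0 : WB G Sg x l0) by (exists w0; repeat split; auto).
    assert (Hn : forall n, WB G Sg (Nat.iter n f x) (l0 + n * (C * (n+1)^d))).
    { induction n.
      - simpl. now rewrite Nat.add_0_r.
      - replace (Nat.iter (S n) f x) with (gmul (Nat.iter n f x) (Nat.iter n f (Delta G f x))).
        + eapply WB_mono. apply WB_mul; [exact IHn | apply HB].
          assert (HP : ((n+1)^d <= (Datatypes.S n + 1)^d)%nat) by (apply Nat.pow_le_mono_l; lia).
          revert HP. generalize ((n+1)^d)%nat ((Datatypes.S n + 1)^d)%nat. intros P Q HP.
          apply (Nat.mul_le_mono_l _ _ C) in HP. apply (Nat.mul_le_mono_l _ _ (Datatypes.S n)) in HP. lia.
        + rewrite <- iter_hom; auto. rewrite Nat.iter_succ_r. f_equal. unfold Delta. gsimpl. reflexivity. }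
    exists (l0 + C)%nat, (S d). intro n. eapply WB_mono. apply Hn.
    assert (1 <= (n+1)^d)%nat by (apply Nat.neq_0_lt_0, Nat.pow_nonzero; lia).
    rewrite Nat.pow_succ_r'. nia.
Qed.

Lemma lnratio_lim : is_lim_seq (fun n => ln (INR (n+1)) / INR (n+1)) 0.
Proof.
  apply (is_lim_comp_seq (fun y => ln y / y) (fun n => INR (n+1)) p_infty 0).
  - apply is_lim_div_ln_p.
  - exists 0%nat. intros n _. discriminate.
  - eapply is_lim_seq_ext; [|apply (proj1 (is_lim_seq_incr_1 INR p_infty)); apply is_lim_seq_INR].
    intro n. rewrite Nat.add_1_r. reflexivity.
Qed.

Lemma invn_lim : is_lim_seq (fun n => / INR n) 0.
Proof.
  replace (Finite 0) with (Rbar_inv p_infty) by reflexivity.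
  apply is_lim_seq_inv. apply is_lim_seq_INR. discriminate.
Qed.

Lemma root_lim (L : nat -> nat) (C d : nat) :
  (forall n, 1 <= L n <= C * (n+1)^d)%nat -> Un_cv (fun n => nat_root (L n) n) 1.
Proof.
  intro HL.
  assert (HC : (1 <= C)%nat). { specialize (HL 0%nat). simpl in HL. rewrite Nat.pow_1_l in HL. lia. }
  apply is_lim_seq_Reals.
  set (t := fun n => / INR n * ln (INR (L n))).
  apply (is_lim_seq_ext (fun n => exp (t n))).
  { intro n. unfold nat_root, t. specialize (HL n). destruct (L n) as [|k]; [lia|]. reflexivity. }
  rewrite <- exp_0.
  apply (is_lim_seq_continuous exp t 0). { apply derivable_continuous_pt, derivable_pt_exp. }
  set (b := fun n => / INR n * ln (INR C) + 2 * INR d * (ln (INR (n+1)) / INR (n+1))).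
  apply (is_lim_seq_le_le_loc (fun _ => 0) t b).
  - exists 1%nat. intros n Hn. specialize (HL n).
    assert (Hn' : 1 <= INR n) by (apply (le_INR 1); lia).
    assert (HLr : 1 <= INR (L n)) by (apply (le_INR 1); lia).
    assert (Hln0 : 0 <= ln (INR (L n))) by (rewrite <- ln_1; apply ln_le; lra).
    assert (Hinv : 0 < / INR n) by (apply Rinv_0_lt_compat; lra).
    unfold t, b. split.
    + apply Rmult_le_pos; lra.
    + assert (HLb : INR (L n) <= INR C * INR (n+1) ^ d).
      { rewrite <- pow_INR, <- mult_INR. apply le_INR. lia. }
      assert (Hn1 : 0 < INR (n+1)) by (rewrite plus_INR; simpl; lra).
      assert (HCr : 1 <= INR C) by (apply (le_INR 1); lia).
      assert (Hl : ln (INR (L n)) <= ln (INR C) + INR d * ln (INR (n+1))).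
      { rewrite <- ln_pow, <- ln_mult; try lra. apply ln_le; lra. apply pow_lt; lra. }
      assert (HlnC : 0 <= ln (INR C)) by (rewrite <- ln_1; apply ln_le; lra).
      assert (Hln1 : 0 <= ln (INR (n+1))) by (rewrite <- ln_1; apply ln_le; rewrite ?plus_INR; simpl; lra).
      assert (Hd : 0 <= INR d) by apply pos_INR.
      assert (Hq : / INR n <= 2 * / INR (n+1)).
      { rewrite plus_INR. simpl. apply (Rmult_le_reg_l (INR n * (INR n + 1))). nra.
        field_simplify; try lra. }
      unfold Rdiv.
      apply Rle_trans with (/ INR n * (ln (INR C) + INR d * ln (INR (n + 1)))).
      * apply Rmult_le_compat_l; lra.
      * rewrite Rmult_plus_distr_l. apply Rplus_le_compat_l.
        assert (0 <= INR d * ln (INR (n+1))) by nra. nra.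
  - apply is_lim_seq_const.
  - replace (Finite 0) with (Finite (0 * ln (INR C) + 2 * INR d * 0)) by (f_equal; ring).
    apply is_lim_seq_plus'.
    + eapply is_lim_seq_ext; [intro n; apply Rmult_comm|].
      replace (0 * ln (INR C)) with (ln (INR C) * 0) by ring.
      apply (is_lim_seq_scal_l _ _ 0). apply invn_lim.
    + apply (is_lim_seq_scal_l _ _ 0). apply lnratio_lim.
Qed.

Lemma ex_least (P : nat -> Prop) : (exists n, P n) -> exists n, P n /\ forall m, P m -> (n <= m)%nat.
Proof.
  intros [n Hn]. revert Hn. induction n as [n IH] using (well_founded_induction Wf_nat.lt_wf). intro Hn.
  destruct (classic (exists m, P m /\ (m < n)%nat)) as [[m [Hm Hlt]]|Hno].
  - exact (IH m Hlt Hm).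
  - exists n. split; auto. intros m Hm. destruct (Nat.le_gt_cases n m); auto.
    exfalso. apply Hno. eauto.
Qed.

Lemma wl_spec (G : Group) (Sg : list G) g : generates G Sg ->
  has_word_of_length G Sg g (word_length G Sg g) /\
  forall m, has_word_of_length G Sg g m -> (word_length G Sg g <= m)%nat.
Proof.
  intro Hgen. unfold word_length. apply epsilon_spec.
  apply ex_least. destruct (Hgen g) as [w [Hw E]]. exists (length w). exists w. auto.
Qed.

Lemma wl_le (G : Group) (Sg : list G) g m : generates G Sg -> WB G Sg g m -> (word_length G Sg g <= m)%nat.
Proof.
  intros Hgen [w [Hw [L E]]]. destruct (wl_spec G Sg g Hgen) as [_ H].
  apply Nat.le_trans with (length w); auto. apply H. exists w. auto.
Qed.

Lemma wl_pos (G : Group) (Sg : list G) g : generates G Sg -> g <> gone -> (1 <= word_length G Sg g)%nat.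
Proof.
  intros Hgen Hg. destruct (wl_spec G Sg g Hgen) as [[w [Hw [L E]]] _].
  destruct w; simpl in L. subst g. simpl in Hg. congruence. lia.
Qed.

Lemma eval_triv (G : Group) (Sg : list G) w : (forall s, In s Sg -> s = gone) -> word_over G Sg w -> eval_word G w = gone.
Proof.
  intros H Hw. induction Hw as [|[b s] w Hs Hw IH]; simpl; auto.
  simpl in Hs. rewrite (H s Hs), IH. destruct b; rewrite ?g_inv_one; apply gmul_1l.
Qed.

Theorem corollary1p4 (N : Group) (S : list N) (phi : N -> N) :
  generates N S ->
  nilpotent N ->
  torsion_free N ->
  (exists g : N, g <> gone) ->
  is_automorphism N phi ->
  homologically_trivial N phi ->
  entropy_is N S phi 1%R.
Proof.
  intros Hgen [c Hc] _ [g0 Hg0] [Hf [Hinj _]] Ht.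
  assert (Hit1 : forall n, Nat.iter n phi gone = gone).
  { induction n; simpl; auto. rewrite IHn. now apply hom_one. }
  assert (Hnz : forall s, s <> gone -> Un_cv (entropy_seq N S phi s) 1).
  { intros s Hs. destruct (poly_bound N S phi c Hgen Hf Ht Hc c s) as [C [d HB]].
    { rewrite Nat.sub_diag. exact I. }
    apply (root_lim (fun n => word_length N S (Nat.iter n phi s)) C d).
    intro n. split.
    - apply wl_pos; auto. intro E. apply Hs. clear HB. induction n; simpl in E; auto.
      apply IHn. apply Hinj. rewrite E. symmetry. now apply hom_one.
    - apply wl_le; auto. }
  split.
  - intros s _. destruct (classic (s = gone)) as [->|Hs].
    + exists 0. split; [|lra]. intros e He. exists 0%nat. intros n _.
      unfold entropy_seq. rewrite Hit1.
      replace (word_length N S gone) with 0%nat.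
      * unfold R_dist, nat_root. rewrite Rminus_0_r, Rabs_R0. exact He.
      * symmetry. apply Nat.le_0_r. apply wl_le; auto. apply WB_one.
    + exists 1. split; [|lra]. now apply Hnz.
  - destruct (classic (exists s, In s S /\ s <> gone)) as [[s [Hin Hs]]|Hno].
    + exists s. split; auto.
    + exfalso. apply Hg0. destruct (Hgen g0) as [w [Hw E]]. rewrite <- E.
      apply (eval_triv N S); auto. intros s Hs. apply NNPP. intro H. apply Hno. eauto.
Qed.
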